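(* Fix $q\in V(G)$ and let $D\in\operatorname{Div}(G)$. Then $D$ is $q$-reduced if and only if $D\in|D|_q$ and $\mathcal{E}_q(D)<\mathcal{E}_q(D')$ for every $D'\in|D|_q$ with $D'\ne D$.
   Context: $G$ is a finite connected multigraph without loop edges, with vertex set $V(G)$ and edge set $E(G)$. A divisor is an element $D=\sum_{v}D(v)(v)$ of the free abelian group $\operatorname{Div}(G)$ on $V(G)$; $\deg(D)=\sum_vD(v)$. The Laplacian $\Delta$ sends a function $f:V(G)\to\mathbb{Q}$ to $\Delta(f)=\sum_v\Delta_v(f)(v)$ with $\Delta_v(f)=\sum_{\{v,w\}\in E(G)}(f(v)-f(w))$ (edges counted with multiplicity). $D_1\sim D_2$ means $D_1-D_2=\Delta(f)$ for some integer-valued $f$. For $q\in V(G)$, $|D|_q=\{E\in\operatorname{Div}(G): E\sim D,\ E(v)\ge 0\text{ for all }v\ne q\}$. For $A\subseteq V(G)$ and $v\in A$, $\operatorname{outdeg}_A(v)$ is the number of edges joining $v$ to $V(G)\setminus A$. A divisor $D$ is $q$-reduced if (i) $D(v)\ge 0$ for all $v\ne q$, and (ii) for every non-empty $A\subseteq V(G)\setminus\{q\}$ there is $v\in A$ with $D(v)<\operatorname{outdeg}_A(v)$. $Q$ is the Laplacian matrix with respect to a labeling of $V(G)$. For degree-zero divisors $D_1,D_2$, the energy pairing is $\langle D_1,D_2\rangle=[D_1]^TL[D_2]$ for any generalized inverse $L$ of $Q$ ($QLQ=Q$), independent of $L$. For divisors $D,E$, $\langle D,E\rangle_q=\langle D-\deg(D)(q),\,E-\deg(E)(q)\rangle$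 and $\mathcal{E}_q(D)=\langle D,D\rangle_q$. *)

(* Defs.v *)
From HB Require Import structures.
From mathcomp Require Import all_boot all_order all_algebra.
Set Implicit Arguments. Unset Strict Implicit. Unset Printing Implicit Defensive.
Import Order.TTheory GRing.Theory Num.Theory.
Local Open Scope ring_scope.

(* A loopless multigraph on vertex set 'I_n is given by an edge-multiplicity
   function m : 'I_n -> 'I_n -> nat (number of edges joining v and w). *)
Definition multigraph (n : nat) (m : 'I_n -> 'I_n -> nat) : Prop :=
  (forall v w, m v w = m w v) /\ (forall v, m v v = 0%N).

Definition adj (n : nat) (m : 'I_n -> 'I_n -> nat) : rel 'I_n :=
  fun v w => (0 < m v w)%N.

Definition connected_graph (n : nat) (m : 'I_n -> 'I_n -> nat) : Prop :=
  forall v w : 'I_n, connect (adj m) v w.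

Definition Div (n : nat) := {ffun 'I_n -> int}.

Definition degD (n : nat) (D : Div n) : int := \sum_v D v.

Definition pointD (n : nat) (q : 'I_n) (k : int) : Div n :=
  [ffun v => if v == q then k else 0].

Definition subD (n : nat) (D E : Div n) : Div n := [ffun v => D v - E v].

Definition laplacian_at (n : nat) (m : 'I_n -> 'I_n -> nat) (f : 'I_n -> int)
  (v : 'I_n) : int := \sum_w (m v w)%:Z * (f v - f w).

Definition lin_equiv (n : nat) (m : 'I_n -> 'I_n -> nat) (D1 D2 : Div n) : Prop :=
  exists f : 'I_n -> int, forall v, D1 v - D2 v = laplacian_at m f v.

Definition linsys (n : nat) (m : 'I_n -> 'I_n -> nat) (q : 'I_n) (D E : Div n) : Prop :=
  lin_equiv m E D /\ (forall v, v != q -> 0 <= E v).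

Definition outdeg (n : nat) (m : 'I_n -> 'I_n -> nat) (A : {set 'I_n}) (v : 'I_n) : nat :=
  (\sum_(w | w \notin A) m v w)%N.

Definition q_reduced (n : nat) (m : 'I_n -> 'I_n -> nat) (q : 'I_n) (D : Div n) : Prop :=
  (forall v, v != q -> 0 <= D v) /\
  (forall A : {set 'I_n}, A != set0 -> q \notin A ->
     exists2 v, v \in A & D v < (outdeg m A v)%:Z).

Definition laplacian_mx (n : nat) (m : 'I_n -> 'I_n -> nat) : 'M[rat]_n :=
  \matrix_(i, j) (if i == j then ((\sum_w m i w)%N)%:R else - (m i j)%:R).

(* A generalized inverse of Q (the energy pairing does not depend on the choice) *)
Definition gen_inv (n : nat) (m : 'I_n -> 'I_n -> nat) : 'M[rat]_n :=
  pinvmx (laplacian_mx m).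

Lemma gen_inv_spec (n : nat) (m : 'I_n -> 'I_n -> nat) :
  laplacian_mx m *m gen_inv m *m laplacian_mx m = laplacian_mx m.
Proof. by rewrite /gen_inv mulmxKpV // submx_refl. Qed.

Definition divvec (n : nat) (D : Div n) : 'cV[rat]_n := \col_i ((D i)%:~R).

Definition energy_pairing (n : nat) (m : 'I_n -> 'I_n -> nat) (D1 D2 : Div n) : rat :=
  ((divvec D1)^T *m gen_inv m *m divvec D2) ord0 ord0.

Definition pairing_q (n : nat) (m : 'I_n -> 'I_n -> nat) (q : 'I_n) (D E : Div n) : rat :=
  energy_pairing m (subD D (pointD q (degD D))) (subD E (pointD q (degD E))).

Definition energy_q (n : nat) (m : 'I_n -> 'I_n -> nat) (q : 'I_n) (D : Div n) : rat :=
  pairing_q m q D D.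

(* Main.v *)
Require Import Defs.
From HB Require Import structures.
From mathcomp Require Import all_boot all_order all_algebra.
From mathcomp Require Import ring lra zify.
Set Implicit Arguments. Unset Strict Implicit. Unset Printing Implicit Defensive.
Import Order.TTheory GRing.Theory Num.Theory.
Local Open Scope ring_scope.

Section Quad.
Variables (n : nat) (m : 'I_n -> 'I_n -> nat).
Hypothesis Hg : multigraph m.

Definition lapf (R : numDomainType) (f : 'I_n -> R) v : R :=
  \sum_w (m v w)%:R * (f v - f w).
Definition quadf (R : numDomainType) (f : 'I_n -> R) : R :=
  \sum_v f v * lapf f v.

Lemma quad2 (R : numDomainType) (f : 'I_n -> R) :
  quadf f *+ 2 = \sum_v \sum_w (m v w)%:R * (f v - f w) ^+ 2.
Proof.
have E : \sum_v \sum_w (m v w)%:R * (f v - f w) ^+ 2 =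
  \sum_v \sum_w (m v w)%:R * (f v * (f v - f w)) +
  \sum_v \sum_w (m v w)%:R * (f w * (f w - f v)).
  rewrite -big_split /=; apply: eq_bigr => v _.
  rewrite -big_split /=; apply: eq_bigr => w _.
  rewrite -mulrDr; congr (_ * _); rewrite sqrrB; ring.
rewrite E; rewrite [X in _ + X]exchange_big /=.
have E2 : \sum_v \sum_w (m v w)%:R * (f v * (f v - f w)) = quadf f.
  apply: eq_bigr => v _; rewrite /lapf mulr_sumr; apply: eq_bigr => w _; ring.
rewrite E2 mulr2n; congr (_ + _); rewrite -E2.
apply: eq_bigr => v _; apply: eq_bigr => w _; by rewrite (proj1 Hg).
Qed.

Lemma quad_ge0 (R : realDomainType) (f : 'I_n -> R) : 0 <= quadf f.
Proof.
rewrite -(pmulrn_lge0 _ (isT : (0 < 2)%N)) quad2.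
apply: sumr_ge0 => v _; apply: sumr_ge0 => w _.
by apply: mulr_ge0; [apply: ler0n | apply: sqr_ge0].
Qed.

Hypothesis Hc : connected_graph m.

Lemma quad_eq0 (R : realDomainType) (f : 'I_n -> R) :
  quadf f = 0 -> forall v w, f v = f w.
Proof.
move=> H0.
have H2 : \sum_v \sum_w (m v w)%:R * (f v - f w) ^+ 2 = 0.
  by rewrite -quad2 H0 mul0rn.
have Hadj : forall v w, adj m v w -> f v = f w.
  move=> v w Hvw.
  have Hv := psumr_eq0P (P := predT) (fun v _ => sumr_ge0 _ (fun w _ =>
     mulr_ge0 (ler0n _ (m v w)) (sqr_ge0 (f v - f w)))) H2 (isT : predT v).
  have Hw := psumr_eq0P (P := predT) (fun w _ =>
     mulr_ge0 (ler0n _ (m v w)) (sqr_ge0 (f v - f w))) Hv (isT : predT w).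
  move/eqP: Hw; rewrite mulf_eq0 pnatr_eq0 sqrf_eq0 subr_eq0.
  by rewrite /adj lt0n in Hvw; rewrite (negbTE Hvw) /= => /eqP.
move=> v w; move: (Hc v w) => /connectP [p Hp ->] {w}.
elim: p v Hp => [|x p IH] v //= /andP [Hvx Hp].
by rewrite (Hadj _ _ Hvx) IH.
Qed.

End Quad.
Section Mx.
Variables (n : nat) (m : 'I_n -> 'I_n -> nat).
Hypothesis Hg : multigraph m.
Hypothesis Hc : connected_graph m.
Local Notation Q := (laplacian_mx m).

Lemma Qentry i k : Q i k = (i == k)%:R * (\sum_w m i w)%:R - (m i k)%:R.
Proof.
rewrite mxE; case: eqP => [<-|_]; last by rewrite mul0r sub0r.
by rewrite (proj2 Hg) subr0 mul1r.
Qed.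

Lemma Qsym : Q^T = Q.
Proof.
apply/matrixP => i j; rewrite !mxE eq_sym; case: eqP => [->|] //.
by rewrite (proj1 Hg).
Qed.

Lemma Qmul_col (f : 'I_n -> rat) : Q *m (\col_i f i) = \col_i lapf m f i.
Proof.
apply/matrixP => i j; rewrite !mxE /lapf.
under eq_bigr => k _ do rewrite Qentry mxE mulrBl.
rewrite sumrB [X in X - _](bigD1 i) //= eqxx mul1r.
rewrite [X in _ + X - _]big1 ?addr0; last first.
  by move=> k Hk; rewrite eq_sym (negbTE Hk) !mul0r.
under [X in _ = X]eq_bigr => k _ do rewrite mulrBr.
rewrite sumrB; congr (_ - _).
by rewrite natr_sum mulr_suml.
Qed.

Lemma rowQ (u : 'rV[rat]_n) : u *m Q = \row_i lapf m (fun j => u 0 j) i.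
Proof.
apply: trmx_inj; rewrite trmx_mul Qsym.
have -> : u^T = \col_i u 0 i by apply/matrixP => i j; rewrite !mxE ord1.
by rewrite Qmul_col; apply/matrixP => i j; rewrite !mxE.
Qed.

Lemma Q1 : Q *m (const_mx 1 : 'cV[rat]_n) = 0.
Proof.
have -> : (const_mx 1 : 'cV[rat]_n) = \col_i (fun _ => 1) i.
  by apply/matrixP => i j; rewrite !mxE.
rewrite Qmul_col; apply/matrixP => i j; rewrite !mxE /lapf.
by rewrite big1 // => w _; rewrite subrr mulr0.
Qed.

Lemma inQ (q : 'I_n) (x : 'cV[rat]_n) : \sum_i x i 0 = 0 -> exists g, x = Q *m g.
Proof.
move=> Hx.
pose S := kermx (const_mx 1 : 'cV[rat]_n).
have QS : (Q <= S)%MS by apply/sub_kermxP; exact: Q1.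
have xS : (x^T <= S)%MS.
  apply/sub_kermxP; apply/matrixP => i j; rewrite !mxE ord1.
  by rewrite -[RHS]Hx; apply: eq_bigr => k _; rewrite !mxE mulr1.
have n1 : (0 < n)%N by case: q => [k Hk]; apply: leq_ltn_trans Hk.
have rS : \rank S = n.-1.
  rewrite /S mxrank_ker.
  have -> : \rank (const_mx 1 : 'cV[rat]_n) = 1%N.
    apply/eqP; rewrite eqn_leq rank_leq_col /= lt0n mxrank_eq0.
    apply/eqP => /matrixP /(_ q 0); rewrite !mxE => /eqP; by rewrite oner_eq0.
  by rewrite subn1.
have kQ : (kermx Q <= (const_mx 1 : 'rV[rat]_n))%MS.
  apply/row_subP => i.
  have Hu : row i (kermx Q) *m Q = 0.
    by apply/sub_kermxP; apply: submx_trans (row_sub _ _) _; apply/sub_kermxP; exact: mulmx_ker.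
  set u := row i (kermx Q) in Hu *; clearbody u.
  have Hq : quadf m (fun j => u 0 j) = 0.
    rewrite /quadf big1 // => v _.
    move/matrixP: Hu => /(_ 0 v); rewrite rowQ !mxE => ->; by rewrite mulr0.
  have -> : u = u 0 q *: const_mx 1.
    apply/matrixP => a b; rewrite !mxE (ord1 a) mulr1.
    exact: (quad_eq0 Hg Hc Hq).
  exact: scalemx_sub (submx_refl _).
have rQ : (n.-1 <= \rank Q)%N.
  have H2 := leq_of_leqif (mxrank_leqif_sup kQ); rewrite mxrank_ker in H2.
  have H1 : (\rank (const_mx (1:rat) : 'rV[rat]_n) <= 1)%N by apply: rank_leq_row.
  have H3 := leq_trans H2 H1; rewrite -subn1; lia.
have SQ : (S <= Q)%MS.
  rewrite -(mxrank_leqif_sup QS).2 rS eqn_leq rQ andbT -rS.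
  exact: (mxrank_leqif_sup QS).1.
have : (x^T <= Q)%MS := submx_trans xS SQ.
case/submxP => g Hg'; exists g^T.
by rewrite -Qsym -trmx_mul -Hg' trmxK.
Qed.

End Mx.
Section Energy.
Variables (n : nat) (m : 'I_n -> 'I_n -> nat).
Hypothesis Hg : multigraph m.
Hypothesis Hc : connected_graph m.
Local Notation Q := (laplacian_mx m).
Local Notation L := (gen_inv m).

Lemma lapf_sum (R : numDomainType) (f : 'I_n -> R) : \sum_v lapf m f v = 0.
Proof.
rewrite /lapf.
under eq_bigr => v _ do (under eq_bigr => w _ do rewrite mulrBr; rewrite sumrB).
rewrite sumrB [X in _ - X]exchange_big /=; apply/eqP; rewrite subr_eq0; apply/eqP.
apply: eq_bigr => v _; apply: eq_bigr => w _; by rewrite (proj1 Hg).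
Qed.

Lemma lap_lapf (h : 'I_n -> int) v : laplacian_at m h v = lapf m h v.
Proof. by apply: eq_bigr => w _; rewrite natz. Qed.

Lemma cast_lapf (h : 'I_n -> int) v :
  ((lapf m h v)%:~R : rat) = lapf m (fun w => (h w)%:~R) v.
Proof.
rewrite /lapf rmorph_sum; apply: eq_bigr => w _.
by rewrite rmorphM rmorphB rmorph_nat.
Qed.

Lemma cast_quadf (h : 'I_n -> int) :
  ((quadf m h)%:~R : rat) = quadf m (fun w => (h w)%:~R).
Proof.
rewrite /quadf rmorph_sum; apply: eq_bigr => w _.
by rewrite rmorphM; congr (_ * _); exact: cast_lapf.
Qed.

Definition Dt (q : 'I_n) (D : Div n) : Div n := subD D (pointD q (degD D)).

Lemma Dt_sum q D : \sum_v Dt q D v = 0.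
Proof.
rewrite /Dt /subD /pointD.
under eq_bigr => v _ do rewrite !ffunE.
rewrite sumrB [X in _ - X](bigD1 q) //= eqxx [X in _ - (_ + X)]big1 ?addr0 ?subrr //.
by move=> v /negbTE ->.
Qed.

Lemma QLQ (z : 'cV[rat]_n) :
  (Q *m z)^T *m L *m (Q *m z) = z^T *m Q *m z.
Proof.
rewrite trmx_mul (Qsym Hg) //.
move: (gen_inv_spec m); move: (gen_inv m) => L0 HL.
rewrite !mulmxA; congr (_ *m _).
by rewrite -!mulmxA [Q *m (L0 *m Q)]mulmxA HL.
Qed.

Lemma entry_tr (A : 'M[rat]_1) : A^T 0 0 = A 0 0.
Proof. by rewrite mxE. Qed.

Lemma energy_shift (q : 'I_n) (D D' : Div n) (h : 'I_n -> int) :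
  (forall v, D' v - D v = laplacian_at m h v) ->
  energy_q m q D' - energy_q m q D =
  ((\sum_v Dt q D v * h v) *+ 2 + quadf m h)%:~R.
Proof.
move=> HD.
have Hdeg : degD D' = degD D.
  apply/eqP; rewrite -subr_eq0 /degD -sumrB.
  under eq_bigr => v _ do rewrite HD lap_lapf.
  by rewrite lapf_sum.
have HDt : forall v, Dt q D' v = Dt q D v + lapf m h v.
  move=> v; rewrite /Dt /subD !ffunE Hdeg -lap_lapf -HD; ring.
pose x := divvec (Dt q D).
pose y : 'cV[rat]_n := \col_i (h i)%:~R.
have Hx' : divvec (Dt q D') = x + Q *m y.
  rewrite (Qmul_col Hg); apply/matrixP => i j; rewrite !mxE HDt intrD cast_lapf.
  congr (_ + _); apply: eq_bigr => w _; by rewrite mxE.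
have [g Hgx] : exists g, x = Q *m g.
  apply: (inQ Hg Hc q).
  transitivity (((\sum_v Dt q D v)%:~R) : rat); last by rewrite Dt_sum.
  rewrite rmorph_sum.
  by apply: eq_bigr => i _; rewrite mxE.
rewrite /energy_q /pairing_q /energy_pairing -/(Dt q D) -/(Dt q D') Hx' -/x.
rewrite Hgx -mulmxDr !QLQ.
have Et : (g + y)^T = g^T + y^T by apply/matrixP => i j; rewrite !mxE.
have Ead : forall A B : 'M[rat]_1, (A + B) 0 0 = A 0 0 + B 0 0.
  by move=> A B; rewrite mxE.
have Hb : (g^T *m Q *m y) 0 0 = ((\sum_v Dt q D v * h v)%:~R : rat).
  have -> : g^T *m Q = x^T by rewrite Hgx trmx_mul (Qsym Hg).
  rewrite mxE rmorph_sum; apply: eq_bigr => k _.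
  by rewrite !mxE rmorphM.
have Hc' : (y^T *m Q *m g) 0 0 = (g^T *m Q *m y) 0 0.
  rewrite -entry_tr !trmx_mul trmxK (Qsym Hg).
  by rewrite mulmxA.
have Hd : (y^T *m Q *m y) 0 0 = ((quadf m h)%:~R : rat).
  rewrite -mulmxA (Qmul_col Hg) cast_quadf mxE.
  by apply: eq_bigr => k _; rewrite !mxE.
rewrite Et !mulmxDl !mulmxDr ?mulmxDl !Ead Hc' Hb Hd.
rewrite rmorphD rmorphMn /=; ring.
Qed.
End Energy.
Lemma outdeg_z (n : nat) (m : 'I_n -> 'I_n -> nat) (A : {set 'I_n}) v :
  (outdeg m A v)%:Z = \sum_(w | w \notin A) (m v w)%:Z.
Proof. by rewrite /outdeg -natz natr_sum; apply: eq_bigr => w _; rewrite natz. Qed.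

Unset Implicit Arguments.

Theorem mainTheorem8 (n : nat) (m : 'I_n -> 'I_n -> nat)
  (Hg : multigraph m) (Hc : connected_graph m) (q : 'I_n) (D : Div n) :
  q_reduced m q D <->
  (linsys m q D D /\
   forall D' : Div n, linsys m q D D' -> D' != D -> energy_q m q D < energy_q m q D').
Proof.
split.
- move=> [Heff Hred]; split.
    split => //; exists (fun _ => 0) => v.
    by rewrite subrr /laplacian_at big1 // => w _; rewrite subrr mulr0.
  move=> D' [[h Hh] Heff'] Hne.
  rewrite -subr_gt0 (energy_shift Hg Hc q Hh) ltr0z.
  have Hqmin : forall v, h q <= h v.
    case: (@arg_minP _ _ _ q predT h isT) => v0 _ Hv0.
    suff E : h v0 = h q by move=> v; rewrite -E; exact: Hv0.
    apply/eqP; rewrite eq_le Hv0 //=; rewrite leNgt; apply/negP => Hlt.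
    pose A := [set v | h v == h v0].
    have HA : A != set0 by apply/set0Pn; exists v0; rewrite inE.
    have HqA : q \notin A by rewrite inE gt_eqF.
    have [v vA Hv] := Hred A HA HqA.
    have vq : v != q by apply: contraNneq HqA => <-.
    have hv : h v = h v0 by move: vA; rewrite inE => /eqP.
    have Hlap : laplacian_at m h v <= - (outdeg m A v)%:Z.
      rewrite outdeg_z -sumrN /laplacian_at [X in _ <= X]big_mkcond /=.
      apply: ler_sum => w _; rewrite inE; case: ifP => wA.
        have H1 := Hv0 w isT; have H2 : h v0 != h w by rewrite eq_sym.
        have H3 : h v0 < h w by rewrite lt_neqAle H2 H1.
        rewrite hv; nia.
      by move/negbFE/eqP: wA => ->; rewrite hv subrr mulr0.
    have := Heff' v vq; rewrite -(subrK (D v) (D' v)) Hh => H; lia.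
  have HS : 0 <= \sum_v Dt q D v * h v.
    have -> : \sum_v Dt q D v * h v = \sum_v Dt q D v * (h v - h q).
      under [RHS]eq_bigr => v _ do rewrite mulrBr.
      by rewrite sumrB -mulr_suml Dt_sum mul0r subr0.
    apply: sumr_ge0 => v _; case: (eqVneq v q) => [->|vq]; first by rewrite subrr mulr0.
    apply: mulr_ge0; last by rewrite subr_ge0.
    by rewrite /Dt /subD /pointD !ffunE (negbTE vq) subr0 Heff.
  have Hquad : 0 < quadf m h.
    rewrite lt_neqAle (quad_ge0 Hg) andbT eq_sym; apply/eqP => H0.
    move/negP: Hne; apply; apply/eqP/ffunP => v.
    have Hc0 := quad_eq0 Hg Hc H0.
    apply/eqP; rewrite -subr_eq0 Hh /laplacian_at big1 // => w _.
    by rewrite (Hc0 v w) subrr mulr0.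
  rewrite mulr2n; lia.
- move=> [[_ Heff] Hmin]; split => // A HA HqA.
  case: (boolP [exists v in A, D v < (outdeg m A v)%:Z]) => [/exists_inP [v vA Hv] | Hno].
    by exists v.
  exfalso.
  have Hge : forall v, v \in A -> (outdeg m A v)%:Z <= D v.
    move=> v vA; rewrite leNgt; apply/negP => H; move/negP: Hno; apply.
    by apply/exists_inP; exists v.
  pose h : 'I_n -> int := fun v => if v \in A then -1 else 0.
  have HlapA : forall v, v \in A -> laplacian_at m h v = - (outdeg m A v)%:Z.
    move=> v vA; rewrite outdeg_z -sumrN [RHS]big_mkcond /=; apply: eq_bigr => w _.
    rewrite /h vA; case: (boolP (w \in A)) => wA /=.
      by rewrite subrr mulr0.
    by rewrite subr0 mulrN1.
  have HlapN : forall v, v \notin A -> 0 <= laplacian_at m h v.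
    move=> v vA; apply: sumr_ge0 => w _; rewrite /h (negbTE vA).
    by apply: mulr_ge0 => //; case: ifP => _; lia.
  have HvqA : forall v, v \in A -> v != q.
    by move=> v vA; apply: contraNneq HqA => <-.
  pose D' : Div n := [ffun v => D v + laplacian_at m h v].
  have Hh : forall v, D' v - D v = laplacian_at m h v.
    by move=> v; rewrite ffunE; ring.
  have Heff' : forall v, v != q -> 0 <= D' v.
    move=> v vq; rewrite ffunE; case: (boolP (v \in A)) => vA.
      by rewrite HlapA //; have := Hge v vA; lia.
    by have := HlapN v vA; have := Heff v vq; lia.
  have Hlin : linsys m q D D' by split => //; exists h.
  have E := energy_shift Hg Hc q Hh.
  have HS : \sum_v Dt q D v * h v <= - quadf m h.
    rewrite /quadf -sumrN; apply: ler_sum => v _; rewrite -lap_lapf.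
    case: (boolP (v \in A)) => vA.
      have hv : h v = -1 by rewrite /h vA.
      rewrite HlapA // hv /Dt /subD /pointD !ffunE (negbTE (HvqA v vA)) subr0.
      by have := Hge v vA; lia.
    have hv : h v = 0 by rewrite /h (negbTE vA).
    by rewrite hv mulr0 mul0r oppr0.
  have Hquad : 0 < quadf m h.
    rewrite lt_neqAle (quad_ge0 Hg) andbT eq_sym; apply/eqP => H0.
    case/set0Pn: HA => v0 v0A.
    by have := quad_eq0 Hg Hc H0 v0 q; rewrite /h v0A (negbTE HqA) => H; lia.
  have Hlt : energy_q m q D' < energy_q m q D.
    by rewrite -subr_lt0 E ltrz0 mulr2n; lia.
  case: (eqVneq D' D) => [HD|HD].
    by move: Hlt; rewrite HD ltxx.
  by have := Hmin D' Hlin HD; rewrite ltNge (ltW Hlt).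
Qed.
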